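(* For every Tychonoff space $X$, the following are equivalent: (1) $C_p(X)\models S_1(\Gamma_f,\mathcal B_f)$ for every $f\in C(X)$; (2) $X\models S_1(\Gamma_F,\mathcal O)$.
   Context: All spaces are Tychonoff; $C_p(X)$ is $C(X)$ with pointwise convergence topology. For $f\in C(X)$: $\Gamma_f$ is the family of infinite $A\subseteq C(X)$ with $f\notin A$ such that every neighbourhood of $f$ contains all but finitely many elements of $A$; $\mathcal B_f$ is the family of sets $B\subseteq C(X)$ such that for every $x\in X$ and $\varepsilon>0$ there is $h\in B$ with $|h(x)-f(x)|<\varepsilon$. Zero-set: $g^{-1}(0)$, $g\in C(X)$; cozero-set: its complement. A cover $\mathcal U$ of $X$ always means $X=\bigcup\mathcal U$, $X\notin\mathcal U$; $\mathcal O$: family of open covers; $\gamma$-cover: infinite, each point in all but finitely many members. $\Gamma_F$: $\gamma$-covers $\mathcal U$ of $X$ by cozero-sets for which there are zero-sets $F(U)\subseteq U$ ($U\in\mathcal U$) with $\{F(U):U\in\mathcal U\}$ a $\gamma$-cover of $X$. $S_1(\mathcal P,\mathcal Q)$: for every sequence $(P_n)$ of elements of $\mathcal P$ there are $p_n\in P_n$ with $\{p_n:n\in\omega\}\in\mathcal Q$. *)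

(* Defs.v *)
From Stdlib Require Import Reals Rtopology List.
Open Scope R_scope.

Record is_topology (X : Type) (op : (X -> Prop) -> Prop) : Prop := {
  top_full  : op (fun _ => True);
  top_inter : forall U V, op U -> op V -> op (fun x => U x /\ V x);
  top_union : forall F : (X -> Prop) -> Prop,
      (forall U, F U -> op U) -> op (fun x => exists U, F U /\ U x)
}.

Definition continuous_R {X : Type} (op : (X -> Prop) -> Prop) (f : X -> R) : Prop :=
  forall V : R -> Prop, open_set V -> op (fun x => V (f x)).

Definition is_closed {X : Type} (op : (X -> Prop) -> Prop) (C : X -> Prop) : Prop :=
  op (fun x => ~ C x).

Definition tychonoff {X : Type} (op : (X -> Prop) -> Prop) : Prop :=
  (forall x y : X, x <> y -> exists U, op U /\ U x /\ ~ U y) /\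
  (forall (C : X -> Prop) (x : X), is_closed op C -> ~ C x ->
     exists f, continuous_R op f /\ f x = 0 /\ forall y, C y -> f y = 1).

Definition zero_set {X : Type} (op : (X -> Prop) -> Prop) (Z : X -> Prop) : Prop :=
  exists g, continuous_R op g /\ forall x, Z x <-> g x = 0.

Definition cozero_set {X : Type} (op : (X -> Prop) -> Prop) (U : X -> Prop) : Prop :=
  exists g, continuous_R op g /\ forall x, U x <-> g x <> 0.

Definition fin_fun {X : Type} (A : (X -> R) -> Prop) : Prop :=
  exists l : list (X -> R), forall g, A g -> In g l.

Definition fin_fam {X : Type} (F : (X -> Prop) -> Prop) : Prop :=
  exists l : list (X -> Prop), forall U, F U ->
    exists V, In V l /\ forall x, U x <-> V x.

Definition basic_nbhd {X : Type} (f : X -> R) (xs : list X) (eps : R) (g : X -> R) : Prop :=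
  forall x, In x xs -> Rabs (g x - f x) < eps.

Definition Gamma_f {X : Type} (op : (X -> Prop) -> Prop) (f : X -> R)
    (A : (X -> R) -> Prop) : Prop :=
  (forall g, A g -> continuous_R op g) /\
  ~ fin_fun A /\
  ~ A f /\
  (forall (xs : list X) (eps : R), 0 < eps ->
     fin_fun (fun g => A g /\ ~ basic_nbhd f xs eps g)).

Definition B_f {X : Type} (op : (X -> Prop) -> Prop) (f : X -> R)
    (B : (X -> R) -> Prop) : Prop :=
  (forall g, B g -> continuous_R op g) /\
  forall (x : X) (eps : R), 0 < eps -> exists h, B h /\ Rabs (h x - f x) < eps.

Definition S1_fun {X : Type} (P Q : ((X -> R) -> Prop) -> Prop) : Prop :=
  forall Pn : nat -> ((X -> R) -> Prop), (forall n, P (Pn n)) ->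
    exists p : nat -> (X -> R), (forall n, Pn n (p n)) /\
      Q (fun g => exists n, g = p n).

Definition is_cover {X : Type} (U : (X -> Prop) -> Prop) : Prop :=
  (forall x, exists V, U V /\ V x) /\ ~ (exists V, U V /\ forall x, V x).

Definition open_cover {X : Type} (op : (X -> Prop) -> Prop) (U : (X -> Prop) -> Prop) : Prop :=
  is_cover U /\ forall V, U V -> op V.

Definition gamma_cover {X : Type} (U : (X -> Prop) -> Prop) : Prop :=
  is_cover U /\ ~ fin_fam U /\
  forall x, fin_fam (fun V => U V /\ ~ V x).

Definition Gamma_F {X : Type} (op : (X -> Prop) -> Prop) (U : (X -> Prop) -> Prop) : Prop :=
  gamma_cover U /\ (forall V, U V -> cozero_set op V) /\
  exists F : (X -> Prop) -> (X -> Prop),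
    (forall V, U V -> zero_set op (F V) /\ forall x, F V x -> V x) /\
    gamma_cover (fun Z => exists V, U V /\ Z = F V).

Definition S1_set {X : Type} (P Q : ((X -> Prop) -> Prop) -> Prop) : Prop :=
  forall Un : nat -> ((X -> Prop) -> Prop), (forall n, P (Un n)) ->
    exists u : nat -> (X -> Prop), (forall n, Un n (u n)) /\
      Q (fun V => exists n, V = u n).

(* Main.v *)
Require Import Defs.
From Stdlib Require Import Reals Rtopology List Lra Lia Classical ClassicalEpsilon FunctionalExtensionality PropExtensionality.
From Stdlib Require Cantor.
Open Scope R_scope.

Lemma set_ext {A : Type} (U V : A -> Prop) : (forall x, U x <-> V x) -> U = V.
Proof. intro H; apply functional_extensionality; intro x; apply propositional_extensionality; auto. Qed.

Lemma op_ext {X : Type} (op : (X -> Prop) -> Prop) (U V : X -> Prop) :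
  op U -> (forall x, U x <-> V x) -> op V.
Proof. intros H E; rewrite <- (set_ext U V E); exact H. Qed.

Definition cont_at (psi : R -> R) (y0 : R) : Prop :=
  forall eps, 0 < eps -> exists d, 0 < d /\ forall z, Rabs (z - y0) < d -> Rabs (psi z - psi y0) < eps.

Lemma cpt_cont_at psi y0 : continuity_pt psi y0 -> cont_at psi y0.
Proof.
  intros H eps Heps. destruct (H eps Heps) as [d [Hd Hz]]. exists d; split; auto.
  intros z Hzd. destruct (Req_dec z y0) as [->|Hne].
  - unfold Rminus; rewrite Rplus_opp_r, Rabs_R0; lra.
  - apply (Hz z). split; [split; [exact I| auto]| exact Hzd].
Qed.

Lemma cont_comp1 {X : Type} (op : (X -> Prop) -> Prop) (g : X -> R) (psi : R -> R) :
  continuous_R op g -> (forall x, cont_at psi (g x)) -> continuous_R op (fun x => psi (g x)).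
Proof.
  intros Hg Hpsi V HV.
  set (W := fun y => exists d, 0 < d /\ forall z, Rabs (z - y) < d -> V (psi z)).
  assert (HW : open_set W).
  { intros y [d [Hd H]]. exists (mkposreal (d/2) ltac:(lra)). intros z Hz. unfold disc in Hz; simpl in Hz.
    exists (d/2). split; [lra|]. intros w Hw. apply H.
    replace (w - y) with ((w - z) + (z - y)) by ring.
    eapply Rle_lt_trans; [apply Rabs_triang| lra]. }
  apply op_ext with (fun x => W (g x)); [apply Hg, HW|]. intro x; split.
  - intros [d [Hd H]]. apply H. unfold Rminus; rewrite Rplus_opp_r, Rabs_R0; lra.
  - intro Hv. destruct (HV _ Hv) as [del Hdel].
    destruct (Hpsi x del (cond_pos del)) as [d [Hd H]]. exists d; split; auto.
    intros z Hz. apply Hdel. unfold disc. apply H; auto.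
Qed.

Lemma cont_plus {X : Type} (op : (X -> Prop) -> Prop) (Htop : is_topology X op) (g1 g2 : X -> R) :
  continuous_R op g1 -> continuous_R op g2 -> continuous_R op (fun x => g1 x + g2 x).
Proof.
  intros H1 H2 V HV.
  set (Fm := fun S : X -> Prop => exists a b d, 0 < d /\
     (forall u v, Rabs (u - a) < d -> Rabs (v - b) < d -> V (u + v)) /\
     S = (fun x => Rabs (g1 x - a) < d /\ Rabs (g2 x - b) < d)).
  apply op_ext with (fun x => exists S, Fm S /\ S x).
  - apply (top_union _ _ Htop). intros S [a [b [d [Hd [_ ->]]]]].
    apply (top_inter _ _ Htop).
    + exact (H1 (disc a (mkposreal d Hd)) (disc_P1 _ _)).
    + exact (H2 (disc b (mkposreal d Hd)) (disc_P1 _ _)).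
  - intro x; split.
    + intros [S [[a [b [d [Hd [HS ->]]]]] [Ha Hb]]]. apply HS; auto.
    + intro Hv. destruct (HV _ Hv) as [del Hdel].
      exists (fun y => Rabs (g1 y - g1 x) < del/2 /\ Rabs (g2 y - g2 x) < del/2). split.
      * exists (g1 x), (g2 x), (del/2). split; [destruct del; simpl; lra|]. split; auto.
        intros u v Hu Hv'. apply Hdel. unfold disc.
        replace (u + v - (g1 x + g2 x)) with ((u - g1 x) + (v - g2 x)) by ring.
        eapply Rle_lt_trans; [apply Rabs_triang| lra].
      * unfold Rminus; rewrite !Rplus_opp_r, Rabs_R0; destruct del; simpl; lra.
Qed.

Lemma cont_const {X : Type} (op : (X -> Prop) -> Prop) (Htop : is_topology X op) (c : R) :
  continuous_R op (fun _ => c).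
Proof.
  intros V HV. destruct (classic (V c)) as [Hc|Hc].
  - apply op_ext with (fun _ => True); [apply (top_full _ _ Htop)|]. intuition.
  - apply op_ext with (fun x => exists U : X -> Prop, False /\ U x).
    + apply (top_union _ _ Htop). intros U [].
    + intro x; split; [intros [U [[] _]] | intro H; contradiction].
Qed.

Lemma cont_at_lin a b y : cont_at (fun t => a * t + b) y.
Proof.
  intros eps Heps. exists (eps / (Rabs a + 1)). split.
  { apply Rdiv_lt_0_compat; [lra| pose proof (Rabs_pos a); lra]. }
  intros z Hz. replace (a * z + b - (a * y + b)) with (a * (z - y)) by ring.
  rewrite Rabs_mult. pose proof (Rabs_pos a). pose proof (Rabs_pos (z - y)).
  apply Rlt_le_trans with ((Rabs a + 1) * (eps / (Rabs a + 1))).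
  - apply Rle_lt_trans with (Rabs a * (eps / (Rabs a + 1))).
    + apply Rmult_le_compat_l; lra.
    + assert (0 < eps / (Rabs a + 1)) by (apply Rdiv_lt_0_compat; lra). nra.
  - right; field; lra.
Qed.

Lemma cont_at_abs y : cont_at Rabs y.
Proof.
  intros eps Heps. exists eps; split; auto. intros z Hz.
  eapply Rle_lt_trans; [apply Rabs_triang_inv2| exact Hz].
Qed.

Lemma cont_at_sq y : cont_at (fun t => t * t) y.
Proof.
  apply cpt_cont_at. apply (continuity_pt_mult id id); apply (derivable_continuous_pt id _ (derivable_pt_id _)).
Qed.

Lemma cont_at_inv y : y <> 0 -> cont_at Rinv y.
Proof.
  intro Hy. apply cpt_cont_at. apply (continuity_pt_inv id); [apply (derivable_continuous_pt id _ (derivable_pt_id _))| exact Hy].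
Qed.

Lemma cont_lin {X : Type} (op : (X -> Prop) -> Prop) g a b :
  continuous_R op g -> continuous_R op (fun x => a * g x + b).
Proof. intro H. apply (cont_comp1 op g (fun t => a * t + b)); auto. intro; apply cont_at_lin. Qed.

Lemma cont_abs {X : Type} (op : (X -> Prop) -> Prop) g :
  continuous_R op g -> continuous_R op (fun x => Rabs (g x)).
Proof. intro H. apply (cont_comp1 op g Rabs); auto. intro; apply cont_at_abs. Qed.

Lemma cont_sq {X : Type} (op : (X -> Prop) -> Prop) g :
  continuous_R op g -> continuous_R op (fun x => g x * g x).
Proof. intro H. apply (cont_comp1 op g (fun t => t * t)); auto. intro; apply cont_at_sq. Qed.

Lemma cont_inv {X : Type} (op : (X -> Prop) -> Prop) g :
  continuous_R op g -> (forall x, g x <> 0) -> continuous_R op (fun x => / g x).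
Proof. intros H Hn. apply (cont_comp1 op g Rinv); auto. intro; apply cont_at_inv; auto. Qed.

Lemma cont_minus {X : Type} (op : (X -> Prop) -> Prop) (Htop : is_topology X op) g1 g2 :
  continuous_R op g1 -> continuous_R op g2 -> continuous_R op (fun x => g1 x - g2 x).
Proof.
  intros H1 H2. replace (fun x => g1 x - g2 x) with (fun x => g1 x + (-1 * g2 x + 0)).
  - apply cont_plus; auto. apply cont_lin; auto.
  - apply functional_extensionality; intro; ring.
Qed.

Lemma cont_mult {X : Type} (op : (X -> Prop) -> Prop) (Htop : is_topology X op) g1 g2 :
  continuous_R op g1 -> continuous_R op g2 -> continuous_R op (fun x => g1 x * g2 x).
Proof.
  intros H1 H2.
  replace (fun x => g1 x * g2 x) with
    (fun x => (/4) * ((fun y => (fun z => g1 z + g2 z) y * (fun z => g1 z + g2 z) y) x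
             - (fun y => (fun z => g1 z - g2 z) y * (fun z => g1 z - g2 z) y) x) + 0).
  - apply cont_lin. apply cont_minus; auto; apply cont_sq; [apply cont_plus| apply cont_minus]; auto.
  - apply functional_extensionality; intro; simpl; field.
Qed.

Lemma cozero_open {X : Type} (op : (X -> Prop) -> Prop) U : cozero_set op U -> op U.
Proof.
  intros [g [Hg HU]]. apply op_ext with (fun x => (fun y => y <> 0) (g x)).
  - apply (Hg (fun y => y <> 0)). intros y Hy. exists (mkposreal (Rabs y) (Rabs_pos_lt y Hy)).
    intros z Hz Hz0. unfold disc in Hz; simpl in Hz. subst z.
    rewrite Rminus_0_l, Rabs_Ropp in Hz. lra.
  - intro x; rewrite HU; tauto.
Qed.

Lemma Rabs_eq_0 x : Rabs x = 0 -> x = 0.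
Proof. intro H. apply NNPP; intro Hn; apply (Rabs_no_R0 x Hn H). Qed.

Lemma fin_fam_list {X : Type} (P : (X -> Prop) -> Prop) :
  fin_fam P -> exists l, forall U, P U -> In U l.
Proof.
  intros [l Hl]. exists l. intros U HU. destruct (Hl U HU) as [V [HV E]].
  rewrite (set_ext U V E); exact HV.
Qed.

Lemma from_GammaF {X : Type} (op : (X -> Prop) -> Prop) (Htop : is_topology X op)
  (UU : (X -> Prop) -> Prop) : Gamma_F op UU ->
  exists A, Gamma_f op (fun _ => 0) A /\
    forall g, A g -> exists U, UU U /\ forall x, Rabs (g x - 0) < 1 -> U x.
Proof.
  intros [Hgam [Hcoz [F [HF HZgam]]]].
  set (Zf := fun Z => exists V, UU V /\ Z = F V).
  assert (Hex : forall Z, exists h : X -> R, Zf Z -> exists V, UU V /\ Z = F V /\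
     continuous_R op h /\ (forall x, h x = 0 <-> Z x) /\ (forall x, ~ V x -> h x = 1)).
  { intro Z. destruct (classic (Zf Z)) as [[V [HV ->]]|HnZ].
    2:{ exists (fun _ => 0). intro; contradiction. }
    destruct (HF V HV) as [[a [Ha Hza]] Hsub].
    destruct (Hcoz V HV) as [b [Hb Hzb]].
    assert (Hden : forall x, Rabs (a x) + Rabs (b x) <> 0).
    { intros x E. pose proof (Rabs_pos (a x)). pose proof (Rabs_pos (b x)).
      assert (Ea : a x = 0) by (apply Rabs_eq_0; lra).
      assert (Eb : b x = 0) by (apply Rabs_eq_0; lra).
      apply (proj1 (Hzb x)); auto. apply Hsub, Hza, Ea. }
    exists (fun x => Rabs (a x) * / (Rabs (a x) + Rabs (b x))). intros _.
    exists V. split; auto. split; auto. split; [|split].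
    - apply cont_mult; auto. apply cont_abs; auto.
      apply cont_inv; auto. apply cont_plus; auto; apply cont_abs; auto.
    - intro x. rewrite Hza. split.
      + intro E. apply Rmult_integral in E. destruct E as [E|E].
        * apply Rabs_eq_0; auto.
        * exfalso; apply (Rinv_neq_0_compat _ (Hden x)); auto.
      + intro E. rewrite E, Rabs_R0. ring.
    - intros x Hnv. assert (Eb : b x = 0) by (apply NNPP; intro; apply Hnv, Hzb; auto).
      rewrite Eb, Rabs_R0, Rplus_0_r. apply Rinv_r.
      intro E; apply (Hden x); rewrite Eb, Rabs_R0; lra. }
  destruct (ClassicalEpsilon.choice _ Hex) as [H HH].
  exists (fun g => exists Z, Zf Z /\ g = H Z). split; [repeat split|].
  - intros g [Z [HZ ->]]. destruct (HH Z HZ) as [V [_ [_ [Hc _]]]]; auto.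
  - intros [l Hl]. apply (proj1 (proj2 HZgam)).
    exists (map (fun g => fun x => g x = 0) l). intros Z HZ.
    exists (fun x => H Z x = 0). split.
    + apply (in_map (fun (g : X -> R) (x : X) => g x = 0) l (H Z)), Hl. exists Z; auto.
    + intro x. destruct (HH Z HZ) as [V [_ [_ [_ [E _]]]]]. rewrite E; tauto.
  - intros [Z [HZ E]]. apply (proj2 (proj1 HZgam)). exists Z. split; auto.
    intro x. destruct (HH Z HZ) as [V [_ [_ [_ [E' _]]]]]. apply E'.
    rewrite <- E; reflexivity.
  - intros xs eps Heps.
    assert (HL : exists L, forall x, In x xs -> forall Z, Zf Z -> ~ Z x -> In Z L).
    { induction xs as [|x0 xs IH].
      - exists nil. intros x [].
      - destruct IH as [L HL].
        destruct (fin_fam_list _ (proj2 (proj2 HZgam) x0)) as [l Hl].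
        exists (l ++ L). intros x [<-|Hx] Z HZ Hn; apply in_or_app; [left|right].
        + apply Hl; auto.
        + apply (HL x Hx); auto. }
    destruct HL as [L HL]. exists (map H L).
    intros g [[Z [HZ ->]] Hnb]. apply in_map.
    apply NNPP; intro Hni. apply Hnb. intros x Hx.
    destruct (classic (Z x)) as [Hz|Hz].
    + destruct (HH Z HZ) as [V [_ [_ [_ [E _]]]]]. rewrite (proj2 (E x) Hz).
      rewrite Rminus_0_r, Rabs_R0; auto.
    + exfalso; apply Hni, (HL x Hx Z HZ Hz).
  - intros g [Z [HZ ->]]. destruct (HH Z HZ) as [V [HV [_ [_ [_ H1]]]]].
    exists V. split; auto. intros x Hx. apply NNPP; intro Hn.
    rewrite (H1 x Hn) in Hx. rewrite Rminus_0_r, Rabs_R1 in Hx. lra.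
Qed.

Lemma dir1 {X : Type} (op : (X -> Prop) -> Prop) (Htop : is_topology X op) :
  (forall f : X -> R, continuous_R op f -> S1_fun (Gamma_f op f) (B_f op f)) ->
  S1_set (Gamma_F op) (open_cover op).
Proof.
  intros H1 Un HUn.
  destruct (ClassicalEpsilon.choice _ (fun n => from_GammaF op Htop (Un n) (HUn n))) as [An HAn].
  destruct (H1 (fun _ => 0) (cont_const op Htop 0) An (fun n => proj1 (HAn n))) as [p [Hp HB]].
  assert (Hu : forall n, exists U, Un n U /\ forall x, Rabs (p n x - 0) < 1 -> U x).
  { intro n. apply (proj2 (HAn n)), Hp. }
  destruct (ClassicalEpsilon.choice _ Hu) as [u Hu'].
  exists u. split; [intro n; apply Hu'|]. split; [split|].
  - intro x. destruct (proj2 HB x 1 Rlt_0_1) as [h [[n ->] Hh]].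
    exists (u n). split; [exists n; auto|]. apply (proj2 (Hu' n)); auto.
  - intros [V [[n ->] Hall]]. destruct (HUn n) as [[[_ Hnt] _] _].
    apply Hnt. exists (u n). split; auto. apply Hu'.
  - intros V [n ->]. apply cozero_open. destruct (HUn n) as [_ [Hc _]]. apply Hc, Hu'.
Qed.

Lemma inf_avoid {X : Type} (op : (X -> Prop) -> Prop) f A :
  Gamma_f op f A -> forall xs eps, 0 < eps -> exists g, A g /\ basic_nbhd f xs eps g.
Proof.
  intros [_ [Hinf [_ Hconv]]] xs eps He. destruct (Hconv xs eps He) as [l Hl].
  apply NNPP; intro Hn. apply Hinf. exists l. intros g Hg. apply Hl. split; auto.
  intro Hb; apply Hn; eauto.
Qed.

Lemma not_fin_fam_dense {X : Type} (W : (X -> Prop) -> Prop) :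
  (forall V, W V -> ~ (forall x, V x)) ->
  (forall xs : list X, exists V, W V /\ forall x, In x xs -> V x) -> ~ fin_fam W.
Proof.
  intros Hnt Hd [l Hl].
  assert (Hxs : exists xs, forall V, In V l -> (exists x, ~ V x) -> exists x, In x xs /\ ~ V x).
  { clear Hl Hd. induction l as [|V0 l IH].
    - exists nil. intros V [].
    - destruct IH as [xs Hxs]. destruct (classic (exists x, ~ V0 x)) as [[x0 Hx0]|Hn].
      + exists (x0 :: xs). intros V [<-|HV] Hex.
        * exists x0; split; [left|]; auto.
        * destruct (Hxs V HV Hex) as [x [Hx Hnx]]. exists x; split; [right|]; auto.
      + exists xs. intros V [<-|HV] Hex; [contradiction|]. apply Hxs; auto. }
  destruct Hxs as [xs Hxs]. destruct (Hd xs) as [V [HV Hall]].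
  destruct (Hl V HV) as [V' [HV' E]].
  destruct (not_all_ex_not _ _ (Hnt V HV)) as [y Hy].
  destruct (Hxs V' HV') as [x [Hx Hnx]].
  - exists y. rewrite <- E; auto.
  - apply Hnx, E, Hall, Hx.
Qed.

Definition Uc {X : Type} (f : X -> R) (c : R) (h : X -> R) : X -> Prop :=
  fun x => Rabs (h x - f x) < c.

Lemma pos_part_ne0 e : e + Rabs e <> 0 <-> 0 < e.
Proof. unfold Rabs; destruct (Rcase_abs e); split; intros; lra. Qed.

Lemma pos_part_eq0 e : e + Rabs e = 0 <-> e <= 0.
Proof. unfold Rabs; destruct (Rcase_abs e); split; intros; lra. Qed.

Lemma block_family {X : Type} (op : (X -> Prop) -> Prop) (Htop : is_topology X op)
  (f : X -> R) (Hf : continuous_R op f) A c :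
  0 < c -> Gamma_f op f A -> ~ (exists h, A h /\ forall x, Uc f c h x) ->
  Gamma_F op (fun U => exists h, A h /\ U = Uc f c h).
Proof.
  intros Hc HA Hno. pose proof HA as [Hcont [Hinf [Hnf Hconv]]].
  set (Ufam := fun U => exists h, A h /\ U = Uc f c h).
  assert (Hnt : forall V, Ufam V -> ~ (forall x, V x)).
  { intros V [h [Hh ->]] Hall. apply Hno; eauto. }
  assert (HUinf : ~ fin_fam Ufam).
  { apply not_fin_fam_dense; auto. intro xs. destruct (inf_avoid op f A HA xs c Hc) as [g [Hg Hb]].
    exists (Uc f c g). split; [exists g; auto|]. intros x Hx; apply Hb; auto. }
  assert (Hcoz : forall h, continuous_R op h -> forall c', zero_set op (fun x => Rabs (h x - f x) <= c')
        /\ cozero_set op (fun x => Rabs (h x - f x) < c')).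
  { intros h Hh c'. assert (Hd : continuous_R op (fun x => h x - f x)) by (apply cont_minus; auto).
    split.
    - exists (fun x => (1 * Rabs (h x - f x) + - c') + Rabs (1 * Rabs (h x - f x) + - c')). split.
      + apply (cont_plus op Htop (fun x => 1 * Rabs (h x - f x) + - c')); [|apply cont_abs];
          apply cont_lin, cont_abs; auto.
      + intro x. rewrite pos_part_eq0. lra.
    - exists (fun x => (-1 * Rabs (h x - f x) + c') + Rabs (-1 * Rabs (h x - f x) + c')). split.
      + apply (cont_plus op Htop (fun x => -1 * Rabs (h x - f x) + c')); [|apply cont_abs];
          apply cont_lin, cont_abs; auto.
      + intro x. rewrite pos_part_ne0. lra. }
  set (hV := fun V => epsilon (inhabits f) (fun h => A h /\ V = Uc f c h)).
  assert (HhV : forall V, Ufam V -> A (hV V) /\ V = Uc f c (hV V)).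
  { intros V HV. apply (epsilon_spec (inhabits f) (fun h => A h /\ V = Uc f c h) HV). }
  set (F := fun V x => Rabs (hV V x - f x) <= c / 2).
  assert (Hkey : forall xs, exists V, Ufam V /\ forall x, In x xs -> F V x).
  { intro xs. destruct (Hconv xs (c/2) ltac:(lra)) as [l0 Hl0].
    apply NNPP; intro Hn. apply HUinf. exists (map (Uc f c) l0).
    intros V HV. exists V. split; [|tauto]. destruct (HhV V HV) as [HA' E].
    rewrite E at 1. apply in_map. apply Hl0. split; auto. intro Hb. apply Hn.
    exists V. split; auto. intros x Hx. unfold F. left. apply Hb; auto. }
  assert (HFsub : forall V, Ufam V -> forall x, F V x -> V x).
  { intros V HV x Hx. destruct (HhV V HV) as [_ E]. rewrite E. unfold Uc, F in *. lra. }
  split; [|split].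
  -
    split; [split|split].
    + intro x. destruct (inf_avoid op f A HA (x :: nil) c Hc) as [g [Hg Hb]].
      exists (Uc f c g). split; [exists g; auto|]. apply Hb; left; auto.
    + intros [V [HV Hall]]. apply (Hnt V HV Hall).
    + exact HUinf.
    + intro x. destruct (Hconv (x :: nil) c Hc) as [l Hl]. exists (map (Uc f c) l).
      intros U [[h [Hh ->]] Hnx]. exists (Uc f c h). split; [|tauto].
      apply in_map, Hl. split; auto. intro Hb; apply Hnx, Hb; left; auto.
  - intros V [h [Hh ->]]. apply Hcoz; auto.
  - exists F. split.
    + intros V HV. split; [|apply HFsub; auto]. apply Hcoz. apply Hcont, HhV, HV.
    + split; [split|split].
      * intro x. destruct (Hkey (x :: nil)) as [V [HV Hx]]. exists (F V). split; [exists V; auto|].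
        apply Hx; left; auto.
      * intros [Z [[V [HV ->]] Hall]]. apply (Hnt V HV). intro x; apply HFsub; auto.
      * apply not_fin_fam_dense.
        -- intros Z [V [HV ->]] Hall. apply (Hnt V HV). intro x; apply HFsub; auto.
        -- intro xs. destruct (Hkey xs) as [V [HV Hx]]. exists (F V). split; [exists V; auto| auto].
      * intro x. destruct (Hconv (x :: nil) (c/2) ltac:(lra)) as [l Hl].
        exists (map (fun h => F (Uc f c h)) l).
        intros Z [[V [HV ->]] Hnx]. exists (F V). split; [|tauto].
        destruct (HhV V HV) as [HA' E].
        assert (E2 : F (Uc f c (hV V)) = F V) by (rewrite <- E; reflexivity).
        rewrite <- E2. apply (in_map (fun h => F (Uc f c h))). apply Hl. split; auto.
        intro Hb. apply Hnx. unfold F. left. apply Hb; left; auto.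
Qed.

Lemma dir2 {X : Type} (op : (X -> Prop) -> Prop) (Htop : is_topology X op) :
  S1_set (Gamma_F op) (open_cover op) ->
  (forall f : X -> R, continuous_R op f -> S1_fun (Gamma_f op f) (B_f op f)).
Proof.
  intros H2 f Hf Pn HPn.
  set (enc := fun k m => Cantor.to_nat (k, m)).
  set (ck := fun k : nat => / (INR k + 1)).
  assert (Hck : forall k, 0 < ck k).
  { intro k. unfold ck. apply Rinv_0_lt_compat. pose proof (pos_INR k); lra. }
  assert (Hne : forall n, exists g, Pn n g).
  { intro n. destruct (HPn n) as [_ [Hinf _]]. apply NNPP; intro Hn; apply Hinf.
    exists nil. intros g Hg; apply Hn; eauto. }
  assert (Hblock : forall k, exists q : nat -> (X -> R), (forall m, Pn (enc k m) (q m)) /\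
             forall x, exists m, Rabs (q m x - f x) < ck k).
  { intro k. destruct (classic (exists m h, Pn (enc k m) h /\ forall x, Uc f (ck k) h x))
      as [[m0 [h0 [Hh0 Hall]]]|Hno].
    - assert (Hq : forall m, exists g, Pn (enc k m) g /\ (m = m0 -> g = h0)).
      { intro m. destruct (Nat.eq_dec m m0) as [->|Hm].
        - exists h0; auto.
        - destruct (Hne (enc k m)) as [g Hg]. exists g; split; auto; intro; contradiction. }
      destruct (ClassicalEpsilon.choice _ Hq) as [q Hq'].
      exists q. split; [intro m; apply Hq'|]. intro x. exists m0.
      rewrite (proj2 (Hq' m0) eq_refl). apply Hall.
    - assert (HG : forall m, Gamma_F op (fun U => exists h, Pn (enc k m) h /\ U = Uc f (ck k) h)).
      { intro m. apply block_family; auto. intro Hex; apply Hno; eauto. }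
      destruct (H2 _ HG) as [u [Hu Hcov]].
      destruct (ClassicalEpsilon.choice _ Hu) as [q Hq].
      exists q. split; [intro m; apply Hq|]. intro x.
      destruct Hcov as [[Hc _] _]. destruct (Hc x) as [V [[m ->] Hx]].
      exists m. destruct (Hq m) as [_ E]. rewrite E in Hx. exact Hx. }
  destruct (ClassicalEpsilon.choice _ Hblock) as [Q HQ].
  exists (fun n => Q (fst (Cantor.of_nat n)) (snd (Cantor.of_nat n))). split.
  - intro n. pose proof (proj1 (HQ (fst (Cantor.of_nat n))) (snd (Cantor.of_nat n))) as H.
    unfold enc in H. rewrite <- surjective_pairing, Cantor.cancel_to_of in H. exact H.
  - split.
    + intros g [n ->]. pose proof (proj1 (HQ (fst (Cantor.of_nat n))) (snd (Cantor.of_nat n))) as H.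
      unfold enc in H. rewrite <- surjective_pairing, Cantor.cancel_to_of in H.
      apply (HPn n); exact H.
    + intros x eps Heps. destruct (archimed_cor1 eps Heps) as [k [Hk Hk0]].
      destruct (proj2 (HQ k) x) as [m Hm]. exists (Q k m). split.
      * exists (enc k m). unfold enc. rewrite Cantor.cancel_of_to. reflexivity.
      * eapply Rlt_trans; [exact Hm|]. eapply Rle_lt_trans; [|exact Hk]. unfold ck.
        apply Rinv_le_contravar; [apply lt_0_INR; lia| lra].
Qed.

Theorem mainTheorem19 (X : Type) (op : (X -> Prop) -> Prop)
  (Htop : is_topology X op) (Htych : tychonoff op) :
  (forall f : X -> R, continuous_R op f -> S1_fun (Gamma_f op f) (B_f op f))
  <-> S1_set (Gamma_F op) (open_cover op).
Proof. split; [apply dir1; auto | apply dir2; auto]. Qed.
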